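(* Let $G_n=H_0H_1\cdots H_{n-1}$ be a spiro hexagonal chain with $n$ hexagons, and let $c_k$ be the common cut-vertex of $H_{k-1}$ and $H_k$, $1\le k\le n-1$. Then $$W(G_n)=5\sum_{k=1}^{n-1}\sum_{i=1}^{k}f(c_i)+\frac{45}{2}n^2+\frac{9}{2}n=5\sum_{k=1}^{n-1}(n-k)f(c_k)+\frac{45}{2}n^2+\frac{9}{2}n,$$ where $f(c_1)=9$ and, for $k\ge2$, $f(c_k)=5(k-1)+9$ if $c_k$ is $o_{k-1}$, $f(c_k)=10(k-1)+9$ if $c_k$ is $m_{k-1}$, and $f(c_k)=15(k-1)+9$ if $c_k$ is $p_{k-1}$.
   Context: All graphs are simple and connected; $d(u,v)$ is the shortest-path distance, and the Wiener index is $W(G)=\sum_{\{u,v\}\subseteq V(G)}d_G(u,v)$. A spiro hexagonal chain of length $n$, $G_n=H_0H_1\cdots H_{n-1}$, is a connected graph in which every block is a hexagon (6-cycle) $H_0,\dots,H_{n-1}$, each hexagon has at most two cut-vertices, each cut-vertex is shared by exactly two hexagons, and for $k=1,\dots,n-1$ the hexagons $H_{k-1}$ and $H_k$ share the cut-vertex $c_k$. For $k\ge1$, a vertex of $H_k$ at distance $1$, $2$, $3$ from $c_k$ is called an ortho-, meta-, para-vertex of $H_k$, denoted $o_k,m_k,p_k$ respectively. For $2\le k\le n-1$, $c_k$ is a vertex of $H_{k-1}$ different from $c_{k-1}$, hence one of $o_{k-1},m_{k-1},p_{k-1}$. *)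

(* Defs.v *)
From HB Require Import structures.
From mathcomp Require Import all_boot all_order all_algebra.
Set Implicit Arguments. Unset Strict Implicit. Unset Printing Implicit Defensive.

(* Shortest-path distance in a graph given by an edge relation e on a finType:
   the least m < #|T| such that there is a walk of length m from u to v
   (for a connected graph on T this is the usual graph distance). *)
Section GraphDist.
Variable T : finType.
Variable e : rel T.
Definition walkb (m : nat) (u v : T) : bool :=
  [exists p : m.-tuple T, path e u p && (last u p == v)].
Definition gdist (u v : T) : nat := find (fun m => walkb m u v) (iota 0 #|T|).
End GraphDist.

Definition wiener (N : nat) (e : rel 'I_N) : nat :=
  \sum_(u : 'I_N) \sum_(v : 'I_N | (u < v)%N) gdist e u v.

(* Concrete spiro hexagonal chain G_n = H_0 ... H_{n-1} on vertices 0 .. 5n.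
   hexv s k j = the j-th vertex (j = 0..5, in cyclic order) of hexagon H_k.
   For k >= 1, vertex 0 of H_k is the cut vertex c_k, which is the vertex at
   position s k of H_{k-1}; the other vertices of H_k are the new vertices
   5k+1, ..., 5k+5 (in cyclic order). *)
Fixpoint hexv (s : nat -> nat) (k j : nat) : nat :=
  match k, j with
  | 0, _ => j
  | k'.+1, 0 => hexv s k' (s k)
  | _, _ => 5 * k + j
  end.

Definition cutv (s : nat -> nat) (k : nat) : nat := hexv s k 0.

(* Admissible position data: c_k is a vertex of H_{k-1}, and for k >= 2 it is
   different from c_{k-1} (= position 0 of H_{k-1}). *)
Definition spiro_data (n : nat) (s : nat -> nat) : Prop :=
  forall k, (1 <= k < n)%N -> (s k < 6)%N /\ ((2 <= k)%N -> (0 < s k)%N).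

Definition spiro_adj (n : nat) (s : nat -> nat) : rel 'I_(5 * n).+1 :=
  fun u v =>
    [exists k : 'I_n, exists j : 'I_6,
       ((val u == hexv s k j) && (val v == hexv s k ((j + 1) %% 6)))
    || ((val v == hexv s k j) && (val u == hexv s k ((j + 1) %% 6)))].

Arguments spiro_adj : clear implicits.

Definition hexdist (i j : nat) : nat :=
  let a := if (i <= j)%N then j - i else i - j in minn a (6 - a).

(* For k >= 2: c_k is the vertex at position s k of H_{k-1}, c_{k-1} is at
   position 0 of H_{k-1}. *)
Definition is_ortho (s : nat -> nat) (k : nat) : bool := hexdist 0 (s k) == 1.
Definition is_meta  (s : nat -> nat) (k : nat) : bool := hexdist 0 (s k) == 2.
Definition is_para  (s : nat -> nat) (k : nat) : bool := hexdist 0 (s k) == 3.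

Definition fc (s : nat -> nat) (k : nat) : nat :=
  if k == 1 then 9
  else if is_ortho s k then 5 * (k - 1) + 9
  else if is_meta s k then 10 * (k - 1) + 9
  else if is_para s k then 15 * (k - 1) + 9
  else 0.

(* Main.v *)
Require Import Defs.
From mathcomp Require Import all_boot all_order all_algebra.
From mathcomp Require Import zify ring lra.
Import GRing.Theory Num.Theory.
Set Implicit Arguments. Unset Strict Implicit.


Definition rk (x : nat) : nat := if x <= 5 then 0 else (x.-1) %/ 5.
Definition rj (x : nat) : nat := if x <= 5 then x else (x.-1) %% 5 + 1.
Definition pk (s : nat -> nat) (k x : nat) : nat :=
  if rk x == k then rj x else if rk x < k then 0 else s k.+1.

Lemma hexv_pk n s k0 j k : spiro_data n s -> k0 < n -> j < 6 ->
  pk s k (hexv s k0 j) = if k == k0 then j else if k < k0 then s k.+1 else 0.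
Proof.
move=> hs; elim: k0 j k => [|k0 IH] j k hk hj.
  rewrite /= /pk /rk /rj.
  have -> : j <= 5 by lia.
  case: k => [|k] //=.
case: j hj => [|j] hj.
  rewrite /=.
  have [h1 h2] := hs k0.+1 ltac:(lia).
  rewrite IH //; last lia.
  case: (ltngtP k k0) => hkk.
  - have -> : (k == k0.+1) = false by lia.
    by have -> : k < k0.+1 by lia.
  - have -> : (k < k0.+1) = false by lia.
    by case: (k == k0.+1).
  - subst. rewrite ltnSn. by have -> : (k0 == k0.+1) = false by lia.
have -> : hexv s k0.+1 j.+1 = 5 * k0.+1 + j.+1 by [].
rewrite /pk /rk /rj.
have -> : (5 * k0.+1 + j.+1 <= 5) = false by lia.
have -> : (5 * k0.+1 + j.+1).-1 %/ 5 = k0.+1 by lia.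
have -> : (5 * k0.+1 + j.+1).-1 %% 5 + 1 = j.+1 by lia.
rewrite [k0.+1 == k]eq_sym.
case: (ltngtP k k0.+1) => hkk //.
Qed.


Lemma rep s n x : 0 < n -> x <= 5 * n ->
  hexv s (rk x) (rj x) = x /\ rk x < n /\ rj x < 6 /\ (0 < rk x -> 0 < rj x).
Proof.
move=> hn hx; rewrite /rk /rj; case: ifP => h5.
  by split => //; lia.
have -> : (x.-1) %/ 5 = ((x.-1) %/ 5).-1.+1 by lia.
have -> : (x.-1) %% 5 + 1 = ((x.-1) %% 5).+1 by lia.
have -> : hexv s ((x.-1) %/ 5).-1.+1 ((x.-1) %% 5).+1
   = 5 * ((x.-1) %/ 5).-1.+1 + ((x.-1) %% 5).+1 by [].
lia.
Qed.

Lemma hexv_le n s k j : spiro_data n s -> k < n -> j < 6 -> hexv s k j <= 5 * k + 5.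
Proof.
move=> hs; elim: k j => [|k IH] j hk hj; first by rewrite /=; lia.
case: j hj => [|j] hj /=.
  have [h1 _] := hs k.+1 ltac:(lia).
  have := IH (s k.+1) ltac:(lia) h1; lia.
lia.
Qed.

Lemma hd_sym a b : hexdist a b = hexdist b a.
Proof. rewrite /hexdist; case: ifP; case: ifP; lia. Qed.

Lemma hd_aa a : hexdist a a = 0.
Proof. by rewrite /hexdist leqnn subnn. Qed.

Lemma hd_tri a b c : a < 6 -> b < 6 -> c < 6 ->
  hexdist a c <= hexdist a b + hexdist b c.
Proof.
move=> ha hb hc.
have H : all (fun x => all (fun y => all (fun z =>
   hexdist x z <= hexdist x y + hexdist y z) (iota 0 6)) (iota 0 6)) (iota 0 6) by [].
move/allP: H => /(_ a); rewrite mem_iota => /(_ ha) /allP /(_ b);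
  rewrite mem_iota => /(_ hb) /allP /(_ c); rewrite mem_iota => /(_ hc). done.
Qed.

Definition stp (j t : nat) :=
  if hexdist ((j + 1) %% 6) t < hexdist j t then (j + 1) %% 6 else (j + 5) %% 6.

Lemma stp_ok j t : j < 6 -> t < 6 -> j != t -> (hexdist (stp j t) t).+1 = hexdist j t.
Proof.
move=> ha hb.
have H : all (fun x => all (fun y =>
   (x != y) ==> ((hexdist (stp x y) y).+1 == hexdist x y)) (iota 0 6)) (iota 0 6) by [].
move/allP: H => /(_ j); rewrite mem_iota => /(_ ha) /allP /(_ t);
  rewrite mem_iota => /(_ hb) /implyP H hne.
by apply/eqP; apply: H.
Qed.

Lemma hd_next j : j < 6 -> hexdist j ((j + 1) %% 6) = 1 /\ hexdist ((j + 1) %% 6) j = 1.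
Proof.
move=> ha.
have H : all (fun x => (hexdist x ((x + 1) %% 6) == 1) && (hexdist ((x + 1) %% 6) x == 1))
  (iota 0 6) by [].
move/allP: H => /(_ j); rewrite mem_iota => /(_ ha) /andP [/eqP -> /eqP ->]. done.
Qed.

Definition dd n s x y := \sum_(k < n) hexdist (pk s k x) (pk s k y).

Lemma pk_lt6 n s k x : spiro_data n s -> 0 < n -> x <= 5 * n -> k < n -> pk s k x < 6.
Proof.
move=> hs hn hx hk.
have [_ [h1 [h2 _]]] := rep s hn hx.
rewrite /pk; case: ifP => // h0; case: ifP => // h3.
have [h4 _] := hs k.+1 ltac:(lia). done.
Qed.

Lemma dd_same_hex n s k0 j j' w : spiro_data n s -> k0 < n -> j < 6 -> j' < 6 ->
  dd n s (hexv s k0 j) w + hexdist j' (pk s k0 w)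
  = dd n s (hexv s k0 j') w + hexdist j (pk s k0 w).
Proof.
move=> hs hk hj hj'.
rewrite /dd (bigD1 (Ordinal hk)) //= [in RHS](bigD1 (Ordinal hk)) //=.
rewrite !(hexv_pk _ hs) // eqxx.
have -> : \sum_(i < n | i != Ordinal hk) hexdist (pk s i (hexv s k0 j)) (pk s i w)
   = \sum_(i < n | i != Ordinal hk) hexdist (pk s i (hexv s k0 j')) (pk s i w).
  apply: eq_bigr => i hi.
  rewrite !(hexv_pk _ hs) //.
  have -> : (i == k0 :> nat) = false.
    apply/negP => /eqP he; move/eqP: hi; apply; apply/val_inj; done.
  done.
move: (\sum_(i < n | _) _) => S; lia.
Qed.


Section G.
Variables (n : nat) (s : nat -> nat).
Hypothesis hn : 0 < n.
Hypothesis hs : spiro_data n s.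

Local Notation T := ('I_(5 * n).+1).

Lemma adj_lip (u w : T) (v : nat) : v <= 5 * n -> spiro_adj n s u w ->
  dd n s u v <= (dd n s w v).+1.
Proof.
move=> hv /existsP [k /existsP [j /orP [/andP [/eqP hu /eqP hw]|/andP [/eqP hw /eqP hu]]]];
  rewrite hu hw.
- have hj1 : (j + 1) %% 6 < 6 by lia.
  have := dd_same_hex v hs (ltn_ord k) (ltn_ord j) hj1.
  have [h1 h2] := hd_next (ltn_ord j).
  have := hd_tri (ltn_ord j) hj1 (pk_lt6 hs hn hv (ltn_ord k)).
  lia.
- have hj1 : (j + 1) %% 6 < 6 by lia.
  have := dd_same_hex v hs (ltn_ord k) (ltn_ord j) hj1.
  have [h1 h2] := hd_next (ltn_ord j).
  have := hd_tri hj1 (ltn_ord j) (pk_lt6 hs hn hv (ltn_ord k)).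
  lia.
Qed.

Lemma leT (u : T) : nat_of_ord u <= 5 * n.
Proof. by have := ltn_ord u; rewrite ltnS. Qed.

Lemma dd_aa x : dd n s x x = 0.
Proof. by rewrite /dd big1 // => k _; rewrite hd_aa. Qed.

Lemma walk_lb (u : T) (p : seq T) : path (spiro_adj n s) u p ->
  dd n s u (last u p) <= size p.
Proof.
elim: p u => [|w p IH] u /=; first by rewrite dd_aa.
move/andP => [e hp].
have := IH w hp. have := adj_lip (leT (last w p)) e. lia.
Qed.

Lemma find_hex (u v : T) : u != v -> exists k0 j,
  [/\ k0 < n, j < 6, nat_of_ord u = hexv s k0 j & j != pk s k0 v].
Proof.
move=> huv.
have [eu [hu1 [hu2 hu3]]] := rep s hn (leT u).
have [ev [hv1 [hv2 hv3]]] := rep s hn (leT v).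
case: (eqVneq (rj u) (pk s (rk u) v)) => hp; last first.
  by exists (rk u), (rj u); split.
move: hp; rewrite [pk s (rk u) v]/pk.
case: (ltngtP (rk v) (rk u)) => hc hp.
- lia.
- exists (rk u).+1, 0; split => //.
  + lia.
  + by rewrite /= -hp eu.
  + rewrite /pk; case: ifP => h1.
    * have := hv3 ltac:(lia); lia.
    * have -> : (rk v < (rk u).+1) = false by lia.
      have [_ h2] := hs (k:=(rk u).+2) ltac:(lia).
      have := h2 ltac:(lia); lia.
- exfalso; move/eqP: huv; apply; apply: val_inj.
  change (nat_of_ord u = nat_of_ord v); by rewrite -eu -ev hc hp.
Qed.

Lemma hd_pos a b : a < 6 -> b < 6 -> a != b -> 0 < hexdist a b.
Proof. move=> ha hb hab; rewrite /hexdist; case: ifP; lia. Qed.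

Lemma sep (u v : T) : u != v -> 0 < dd n s u v.
Proof.
move=> /find_hex [k0 [j [hk hj eu hne]]].
rewrite /dd (bigD1 (Ordinal hk)) //= eu (hexv_pk _ hs) // eqxx.
have := hd_pos hj (pk_lt6 hs hn (leT v) hk) hne. lia.
Qed.

Lemma descent d (u v : T) : dd n s u v = d.+1 ->
  exists w : T, spiro_adj n s u w /\ dd n s w v = d.
Proof.
move=> hd.
have huv : u != v by apply/eqP => e; rewrite e dd_aa in hd.
move: (find_hex huv) => [k0 [j [hk hj eu hne]]].
set t := pk s k0 v.
have ht : t < 6 := pk_lt6 hs hn (leT v) hk.
have hst : stp j t < 6 by rewrite /stp; case: ifP; lia.
have hle : hexv s k0 (stp j t) < (5*n).+1 by have := hexv_le hs hk hst; lia.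
have hadj : forall w : T, nat_of_ord w = hexv s k0 (stp j t) -> spiro_adj n s u w.
  move=> w; rewrite /stp; case: ifP => _ hw.
  - apply/existsP; exists (Ordinal hk); apply/existsP; exists (Ordinal hj).
    by apply/orP; left; rewrite /= eu hw !eqxx.
  - have h5 : (j + 5) %% 6 < 6 by lia.
    apply/existsP; exists (Ordinal hk); apply/existsP; exists (Ordinal h5).
    apply/orP; right; rewrite /= eu hw eqxx /=.
    have -> : ((j + 5) %% 6 + 1) %% 6 = j by lia.
    by rewrite eqxx.
exists (Ordinal hle); split; first by apply: hadj.
have := dd_same_hex v hs hk hj hst; have := stp_ok hj ht hne.
rewrite -eu /= -/t. lia.
Qed.

Lemma walk_ub d : forall u v : T, dd n s u v = d -> walkb (spiro_adj n s) d u v.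
Proof.
elim: d => [|d IH] u v hd.
  have e : u = v.
    by apply/eqP; apply/negP => /negP /sep; rewrite hd.
  by subst; apply/existsP; exists [tuple]; rewrite /= eqxx.
have [w [e hw]] := descent hd.
move/existsP: (IH w v hw) => [p /andP [hp hl]].
apply/existsP; exists (cons_tuple w p); by rewrite /= e hp hl.
Qed.

Lemma find_iota_eq (P : pred nat) : forall N a d, d < N -> P (a + d) ->
  (forall m, m < d -> ~~ P (a + m)) -> find P (iota a N) = d.
Proof.
elim=> [|N IH] a d //.
case: d => [|d] hd hP hm /=.
  by rewrite addn0 in hP; rewrite hP.
have := hm 0 erefl; rewrite addn0 => /negbTE ->.
congr S; apply: IH.
- lia.
- by rewrite addSnnS.
- move=> m hm'; rewrite addSnnS; apply: hm; lia.
Qed.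

Lemma hd_le3 a b : hexdist a b <= 3.
Proof. rewrite /hexdist; case: ifP; lia. Qed.

Lemma gdist_dd (u v : T) : gdist (spiro_adj n s) u v = dd n s u v.
Proof.
rewrite /gdist card_ord; apply: find_iota_eq => //.
- have : dd n s u v <= 3 * n.
    rewrite /dd; apply: (@leq_trans (\sum_(k < n) 3)); first by apply: leq_sum => k _; apply: hd_le3.
    by rewrite big_const_ord iter_addn_0.
  lia.
- exact: walk_ub.
- move=> m hm; apply/negP => /existsP [p /andP [hp /eqP hl]].
  have := walk_lb hp; rewrite hl size_tuple. lia.
Qed.
End G.


Lemma pk_range s k x : pk s k x =
  if x <= 5 * k then 0 else if x <= 5 * k + 5 then x - 5 * k else s k.+1.
Proof.
rewrite /pk /rk /rj.
case: (leqP x 5) => h1; case: (leqP x (5 * k)) => h2; case: (leqP x (5 * k + 5)) => h3;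
  case: eqP => ?; try case: ltnP => ?; lia.
Qed.

Lemma count_pk n s k (G : nat -> nat) : k < n ->
  \sum_(0 <= x < (5 * n).+1) G (pk s k x)
  = (5 * k + 1) * G 0 + (G 1 + G 2 + G 3 + G 4 + G 5) + 5 * (n - 1 - k) * G (s k.+1).
Proof.
move=> hk.
rewrite (big_cat_nat _ (n := 5 * k + 1)) //=; last lia.
rewrite (big_cat_nat _ (m := 5 * k + 1) (n := 5 * k + 6)) //=; try lia.
have -> : \sum_(0 <= x < 5 * k + 1) G (pk s k x) = \sum_(0 <= x < 5 * k + 1) G 0.
  apply: eq_big_nat => x hx; rewrite pk_range.
  by have -> : x <= 5 * k by lia.
have -> : \sum_(5 * k + 6 <= x < (5 * n).+1) G (pk s k x)
   = \sum_(5 * k + 6 <= x < (5 * n).+1) G (s k.+1).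
  apply: eq_big_nat => x hx; rewrite pk_range.
  have -> : x <= 5 * k = false by lia.
  by have -> : x <= 5 * k + 5 = false by lia.
have -> : \sum_(5 * k + 1 <= x < 5 * k + 6) G (pk s k x)
   = \sum_(5 * k + 1 <= x < 5 * k + 6) G (x - 5 * k).
  apply: eq_big_nat => x hx; rewrite pk_range.
  have -> : x <= 5 * k = false by lia.
  by have -> : x <= 5 * k + 5 by lia.
rewrite !sum_nat_const_nat.
have -> : 5 * k + 1 = 1 + 5 * k by lia.
rewrite big_addn.
have -> : 5 * k + 6 - 5 * k = 6 by lia.
do 5! rewrite big_nat_recr //=.
rewrite big_geq // !addnK.
have -> : (5 * n).+1 - (5 * k + 6) = 5 * (n - 1 - k) by lia.
lia.
Qed.

Lemma hd00 : hexdist 0 0 = 0. Proof. by []. Qed.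
Lemma hd01 : hexdist 0 1 = 1. Proof. by []. Qed.
Lemma hd02 : hexdist 0 2 = 2. Proof. by []. Qed.
Lemma hd03 : hexdist 0 3 = 3. Proof. by []. Qed.
Lemma hd04 : hexdist 0 4 = 2. Proof. by []. Qed.
Lemma hd05 : hexdist 0 5 = 1. Proof. by []. Qed.
Lemma hd10 : hexdist 1 0 = 1. Proof. by []. Qed.
Lemma hd11 : hexdist 1 1 = 0. Proof. by []. Qed.
Lemma hd12 : hexdist 1 2 = 1. Proof. by []. Qed.
Lemma hd13 : hexdist 1 3 = 2. Proof. by []. Qed.
Lemma hd14 : hexdist 1 4 = 3. Proof. by []. Qed.
Lemma hd15 : hexdist 1 5 = 2. Proof. by []. Qed.
Lemma hd20 : hexdist 2 0 = 2. Proof. by []. Qed.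
Lemma hd21 : hexdist 2 1 = 1. Proof. by []. Qed.
Lemma hd22 : hexdist 2 2 = 0. Proof. by []. Qed.
Lemma hd23 : hexdist 2 3 = 1. Proof. by []. Qed.
Lemma hd24 : hexdist 2 4 = 2. Proof. by []. Qed.
Lemma hd25 : hexdist 2 5 = 3. Proof. by []. Qed.
Lemma hd30 : hexdist 3 0 = 3. Proof. by []. Qed.
Lemma hd31 : hexdist 3 1 = 2. Proof. by []. Qed.
Lemma hd32 : hexdist 3 2 = 1. Proof. by []. Qed.
Lemma hd33 : hexdist 3 3 = 0. Proof. by []. Qed.
Lemma hd34 : hexdist 3 4 = 1. Proof. by []. Qed.
Lemma hd35 : hexdist 3 5 = 2. Proof. by []. Qed.
Lemma hd40 : hexdist 4 0 = 2. Proof. by []. Qed.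
Lemma hd41 : hexdist 4 1 = 3. Proof. by []. Qed.
Lemma hd42 : hexdist 4 2 = 2. Proof. by []. Qed.
Lemma hd43 : hexdist 4 3 = 1. Proof. by []. Qed.
Lemma hd44 : hexdist 4 4 = 0. Proof. by []. Qed.
Lemma hd45 : hexdist 4 5 = 1. Proof. by []. Qed.
Lemma hd50 : hexdist 5 0 = 1. Proof. by []. Qed.
Lemma hd51 : hexdist 5 1 = 2. Proof. by []. Qed.
Lemma hd52 : hexdist 5 2 = 3. Proof. by []. Qed.
Lemma hd53 : hexdist 5 3 = 2. Proof. by []. Qed.
Lemma hd54 : hexdist 5 4 = 1. Proof. by []. Qed.
Lemma hd55 : hexdist 5 5 = 0. Proof. by []. Qed.
Definition hdE := (hd00, hd01, hd02, hd03, hd04, hd05, hd10, hd11, hd12, hd13, hd14, hd15, hd20, hd21, hd22, hd23, hd24, hd25, hd30, hd31, hd32, hd33, hd34, hd35, hd40, hd41, hd42, hd43, hd44, hd45, hd50, hd51, hd52, hd53, hd54, hd55).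

Lemma per_k n s k : spiro_data n s -> k < n ->
  \sum_(0 <= x < (5 * n).+1) \sum_(0 <= y < (5 * n).+1) hexdist (pk s k x) (pk s k y)
  = 54 + 90 * (n - 1) + 50 * k * (n - 1 - k) * hexdist 0 (s k.+1).
Proof.
move=> hs hk.
have := count_pk s (fun i => \sum_(0 <= y < (5 * n).+1) hexdist i (pk s k y)) hk.
rewrite /= => ->.
rewrite !(count_pk s (hexdist _) hk).
have [b eb] : exists b, n = k.+1 + b by exists (n - k.+1); lia.
have hb : n - 1 - k = b by lia.
have hb' : n - 1 = k + b by lia.
rewrite hb hb'.
case: b eb hb hb' => [|b] eb _ _.
  rewrite !muln0 !mul0n !addn0 ?hdE. lia.
have [ht _] := hs k.+1 ltac:(lia).
move: ht; case: (s k.+1) => [|[|[|[|[|[|t]]]]]] //= _; rewrite ?hdE; ring.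
Qed.


Lemma sum_sym N (F : 'I_N -> 'I_N -> nat) : (forall u v, F u v = F v u) ->
  (forall u, F u u = 0) ->
  \sum_(u : 'I_N) \sum_(v : 'I_N) F u v = 2 * \sum_(u : 'I_N) \sum_(v : 'I_N | u < v) F u v.
Proof.
move=> Fs F0.
have E : forall u : 'I_N, \sum_(v : 'I_N) F u v
   = \sum_(v : 'I_N | u < v) F u v + \sum_(v : 'I_N | v < u) F u v.
  move=> u; rewrite (bigID (fun v : 'I_N => u < v)) /=; congr (_ + _).
  rewrite (bigD1 u) /=; last by rewrite ltnn.
  rewrite F0 add0n; apply: eq_bigl => v.
  by rewrite -leqNgt ltn_neqAle andbC.
under eq_bigr => u _ do rewrite E.
rewrite big_split /= mul2n -addnn; congr (_ + _).
rewrite (exchange_big_dep xpredT) //=.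
apply: eq_bigr => v _; apply: eq_bigr => u _; apply: Fs.
Qed.

Lemma wiener2 n s : 0 < n -> spiro_data n s -> 2 * wiener (spiro_adj n s)
  = \sum_(k < n) (54 + 90 * (n - 1) + 50 * k * (n - 1 - k) * hexdist 0 (s k.+1)).
Proof.
move=> hn hs.
rewrite /wiener.
have -> : \sum_(u : 'I_(5 * n).+1) \sum_(v : 'I_(5 * n).+1 | u < v) gdist (spiro_adj n s) u v
   = \sum_(u : 'I_(5 * n).+1) \sum_(v : 'I_(5 * n).+1 | u < v) dd n s u v.
  apply: eq_bigr => u _; apply: eq_bigr => v _; exact: gdist_dd.
rewrite -(@sum_sym _ (fun u v : 'I_(5 * n).+1 => dd n s u v)); first last.
- by move=> u; exact: dd_aa.
- by move=> u v; rewrite /dd; apply: eq_bigr => k _; apply: hd_sym.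
rewrite /dd.
rewrite (eq_bigr (fun u : 'I_(5 * n).+1 =>
   \sum_(k < n) \sum_(v : 'I_(5 * n).+1) hexdist (pk s k u) (pk s k v))); last first.
  by move=> u _; rewrite exchange_big.
rewrite exchange_big /=; apply: eq_bigr => k _.
rewrite -(per_k hs (ltn_ord k)).
rewrite [RHS]big_mkord; apply: eq_bigr => u _; by rewrite big_mkord.
Qed.

Lemma fc_eq n s k : spiro_data n s -> 1 <= k < n ->
  fc s k = 5 * (k - 1) * hexdist 0 (s k) + 9.
Proof.
move=> hs hk; rewrite /fc; case: eqP => [->|hk1]; first by rewrite muln0 mul0n.
have [h1 h2] := hs k hk.
have h3 := h2 ltac:(lia).
rewrite /is_ortho /is_meta /is_para.
move: h1 h3; case: (s k) => [|[|[|[|[|[|t]]]]]] //= _ _; rewrite ?hdE //=; lia.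
Qed.

Lemma exch (f : nat -> nat) n :
  \sum_(1 <= k < n) \sum_(1 <= i < k.+1) f i = \sum_(1 <= k < n) (n - k) * f k.
Proof.
elim: n => [|n IH]; first by rewrite !big_geq.
case: n IH => [|n] IH; first by rewrite !big_geq.
rewrite big_nat_recr //= IH.
rewrite [RHS](eq_big_nat _ _ (F2 := fun k => (n.+1 - k) * f k + f k)); last first.
  move=> i hi; have -> : n.+2 - i = (n.+1 - i).+1 by lia. by rewrite mulSn addnC.
rewrite big_split /= [in RHS]big_nat_recr //= subnn mul0n addn0. done.
Qed.

Lemma tri2 n : 2 * \sum_(1 <= k < n) (n - k) = n * (n - 1).
Proof.
elim: n => [|n IH]; first by rewrite big_geq.
case: n IH => [|n] IH; first by rewrite big_geq.
rewrite (eq_big_nat _ _ (F2 := fun k => (n.+1 - k) + 1)); last by move=> i hi; lia.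
rewrite big_split /= sum_nat_const_nat big_nat_recr //= subnn addn0.
move: IH; move: (\sum_(1 <= k < n.+1) (n.+1 - k)) => S. lia.
Qed.

Lemma reidx (h : nat -> nat) n : 0 < n ->
  \sum_(k < n) k * (n - 1 - k) * h k.+1 = \sum_(1 <= k < n) (n - k) * (k - 1) * h k.
Proof.
case: n => [|n] // _.
rewrite -(big_mkord xpredT (fun k => k * (n.+1 - 1 - k) * h k.+1)) big_nat_recr //=.
have -> : n.+1 - 1 - n = 0 by lia.
rewrite muln0 mul0n addn0 big_add1 /=.
apply: eq_big_nat => k hk.
have -> : n.+1 - 1 - k = n - k by lia.
have -> : n.+1 - k.+1 = n - k by lia.
have -> : k.+1 - 1 = k by lia.
by rewrite [k * _]mulnC.
Qed.

Lemma key n s : 0 < n -> spiro_data n s ->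
  2 * wiener (spiro_adj n s) = 10 * \sum_(1 <= k < n) (n - k) * fc s k + 45 * n * n + 9 * n.
Proof.
move=> hn hs.
rewrite wiener2 // !big_split /= !big_const_ord !iter_addn_0.
rewrite (eq_bigr (fun k : 'I_n => 50 * (k * (n - 1 - k) * hexdist 0 (s k.+1)))); last first.
  by move=> k _; rewrite !mulnA.
rewrite -big_distrr /=.
rewrite (reidx (fun k => hexdist 0 (s k)) hn).
rewrite [in RHS](eq_big_nat _ _ (F2 := fun k => 5 * ((n - k) * (k - 1) * hexdist 0 (s k)) + 9 * (n - k)));
  last first.
  move=> k hk; rewrite (fc_eq hs hk).
  rewrite mulnDr; congr (_ + _); [by rewrite !mulnA [(n - k) * 5]mulnC | by rewrite mulnC].
rewrite big_split /= -!big_distrr /=.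
have := tri2 n.
move: (\sum_(1 <= k < n) (n - k)) => S.
move: (\sum_(1 <= i < n) (n - i) * (i - 1) * hexdist 0 (s i)) => X.
move=> hS.
nia.
Qed.

Local Open Scope ring_scope.

Theorem theorem2p2 (n : nat) (s : nat -> nat) :
  (1 <= n)%N -> spiro_data n s ->
  let W : rat := (wiener (spiro_adj n s))%:R in
  W = 5 * (\sum_(1 <= k < n) \sum_(1 <= i < k.+1) (fc s i)%:R)
        + 45 / 2 * (n%:R) ^+ 2 + 9 / 2 * n%:R
  /\
  W = 5 * (\sum_(1 <= k < n) ((n - k)%N)%:R * (fc s k)%:R)
        + 45 / 2 * (n%:R) ^+ 2 + 9 / 2 * n%:R.
Proof.
move=> hn hs W.
have hk := key hn hs.
have e1 : \sum_(1 <= k < n) \sum_(1 <= i < k.+1) ((fc s i)%:R : rat)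
    = (\sum_(1 <= k < n) (n - k) * fc s k)%N%:R.
  rewrite -(exch (fc s) n) natr_sum; apply: eq_bigr => k _; by rewrite natr_sum.
have e2 : \sum_(1 <= k < n) ((n - k)%N)%:R * ((fc s k)%:R : rat)
    = (\sum_(1 <= k < n) (n - k) * fc s k)%N%:R.
  rewrite natr_sum; apply: eq_bigr => k _; by rewrite natrM.
rewrite e1 e2.
move: hk; rewrite /W.
move: (\sum_(1 <= k < n) (n - k) * fc s k)%N => Y.
move: (wiener (spiro_adj n s)) => w hk.
have hW : ((2 * w)%N%:R : rat) = ((10 * Y + 45 * n * n + 9 * n)%N)%:R by rewrite hk.
move: hW; rewrite !natrD !natrM expr2 => hW.
split; lra.
Qed.
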